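(* Suppose $b=0$ and $\alpha(a\alpha+b\beta)\neq0$, i.e. $\alpha\neq0$ and $a\neq0$. Then the only control set of $\Sigma$ is the whole group $G$.
   Context: Let $G=\{(x,y)\in\mathbb{R}^2:x>0\}$. Fix $\Omega=[u_*,u^*]$ with $u_*<0<u^*$. The admissible controls $\mathcal U$ are the piecewise constant functions $\mathbb{R}\to\Omega$. The system is $\Sigma$: $\dot x=u\alpha x$, $\dot y=a(x-1)+by+ux\beta$, with $(a,b),(\alpha,\beta)\in\mathbb{R}^2\setminus\{(0,0)\}$. We write $\varphi(t,p,u)$ for its solutions and $\mathcal O^+(p)=\{\varphi(t,p,u):t\ge0,u\in\mathcal U\}$; closures are taken in $G$. A control set is a subset $\mathcal C\subset G$ that is maximal with respect to inclusion among the sets satisfying both of the following: (i) every $p\in\mathcal C$ admits $u\in\mathcal U$ with $\varphi(t,p,u)\in\mathcal C$ for all $t\ge0$; (ii) $\mathcal C\subset\operatorname{cl}\mathcal O^+(p)$ for all $p\in\mathcal C$. *)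

(* Defs.v *)
From Stdlib Require Import Reals Lra List.
Open Scope R_scope.

Definition pt := (R * R)%type.
Definition inG (p : pt) : Prop := 0 < fst p.

Definition fx (alpha v : R) (p : pt) : R := v * alpha * fst p.
Definition fy (a b beta v : R) (p : pt) : R :=
  a * (fst p - 1) + b * snd p + v * fst p * beta.

Definition loc_const (u : R -> R) (t : R) : Prop :=
  exists d, 0 < d /\ forall s, Rabs (s - t) < d -> u s = u t.

(* Admissible controls: piecewise constant functions R -> [umin, umax]:
   on every compact interval, u is locally constant except at finitely many
   points (the switching times). *)
Definition admissible (umin umax : R) (u : R -> R) : Prop :=
  (forall t, umin <= u t <= umax) /\
  (forall T0 T1, exists L : list R,
     forall t, T0 <= t <= T1 -> ~ In t L -> loc_const u t).

(* gam is the solution phi(., p, u) of Sigma: continuous, starting at p,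
   and satisfying the ODE at every point where u is locally constant
   (i.e. away from the switching times). For piecewise constant u this
   determines the solution uniquely (the system is affine). *)
Definition is_traj (a b alpha beta : R) (u : R -> R) (p : pt) (gam : R -> pt)
  : Prop :=
  gam 0 = p /\
  (forall t, continuity_pt (fun s => fst (gam s)) t /\
             continuity_pt (fun s => snd (gam s)) t) /\
  (forall t, loc_const u t ->
     derivable_pt_lim (fun s => fst (gam s)) t (fx alpha (u t) (gam t)) /\
     derivable_pt_lim (fun s => snd (gam s)) t (fy a b beta (u t) (gam t))).

Definition orbit_plus (a b alpha beta umin umax : R) (p : pt) (q : pt) : Prop :=
  exists u gam t, admissible umin umax u /\ is_traj a b alpha beta u p gam /\
    0 <= t /\ gam t = q.

Definition closG (S : pt -> Prop) (q : pt) : Prop :=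
  inG q /\ forall eps, 0 < eps -> exists r, S r /\
    Rabs (fst r - fst q) < eps /\ Rabs (snd r - snd q) < eps.

Definition ctrl_cond (a b alpha beta umin umax : R) (C : pt -> Prop) : Prop :=
  (forall p, C p -> inG p) /\
  (forall p, C p -> exists u gam, admissible umin umax u /\
       is_traj a b alpha beta u p gam /\ forall t, 0 <= t -> C (gam t)) /\
  (forall p, C p -> forall q, C q ->
       closG (orbit_plus a b alpha beta umin umax p) q).

Definition control_set (a b alpha beta umin umax : R) (C : pt -> Prop) : Prop :=
  ctrl_cond a b alpha beta umin umax C /\
  forall D : pt -> Prop, ctrl_cond a b alpha beta umin umax D ->
    (forall p, C p -> D p) -> forall p, D p -> C p.

(* Main.v *)
Require Import Defs.
From Stdlib Require Import Reals Lra List.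
From Coquelicot Require Import Coquelicot.
Open Scope R_scope.

Definition gk (k t : R) : R := if Req_EM_T k 0 then t else (exp (k*t) - 1)/k.

Lemma gk_deriv k t : derivable_pt_lim (fun s => gk k s) t (exp (k*t)).
Proof.
  unfold gk; destruct (Req_EM_T k 0) as [->|Hk].
  - rewrite Rmult_0_l, exp_0. apply derivable_pt_lim_id.
  - apply is_derive_Reals. auto_derive; auto. field; auto.
Qed.

Lemma gk_0 k : gk k 0 = 0.
Proof. unfold gk; destruct (Req_EM_T k 0); [lra|]. rewrite Rmult_0_r, exp_0. field; auto. Qed.

Lemma lip_cont f t : (forall s, Rabs (f s - f t) <= Rabs (s - t)) -> continuity_pt f t.
Proof.
  intros H. apply continuity_pt_locally. intros eps. exists eps. intros y Hy.
  apply Rle_lt_trans with (1 := H y). exact Hy.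
Qed.

Lemma cont_min T t : continuity_pt (fun s => Rmin s T) t.
Proof.
  apply lip_cont. intros s. unfold Rmin.
  destruct (Rle_dec s T), (Rle_dec t T); unfold Rabs;
  repeat destruct Rcase_abs; lra.
Qed.

Lemma cont_max T t : continuity_pt (fun s => Rmax s T - T) t.
Proof.
  apply lip_cont. intros s. unfold Rmax.
  destruct (Rle_dec s T), (Rle_dec t T); unfold Rabs;
  repeat destruct Rcase_abs; lra.
Qed.

Definition seg (a alpha beta v : R) (p : pt) (t : R) : pt :=
  (fst p * exp (v*alpha*t), snd p + (a + v*beta) * fst p * gk (v*alpha) t - a*t).

Lemma seg_dx a alpha beta v p t :
  derivable_pt_lim (fun s => fst (seg a alpha beta v p s)) t
     (fx alpha v (seg a alpha beta v p t)).
Proof.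
  unfold seg, fx; simpl. apply is_derive_Reals. auto_derive; auto. ring.
Qed.

Lemma seg_dy a alpha beta v p t :
  derivable_pt_lim (fun s => snd (seg a alpha beta v p s)) t
     (fy a 0 beta v (seg a alpha beta v p t)).
Proof.
  unfold seg, fy; simpl.
  assert (H := gk_deriv (v*alpha) t). apply is_derive_Reals in H.
  apply is_derive_Reals.
  auto_derive.
  - eexists; exact H.
  - rewrite (is_derive_unique _ _ _ H). ring.
Qed.

Lemma seg_0 a alpha beta v p : seg a alpha beta v p 0 = p.
Proof.
  destruct p as [x y]. unfold seg; simpl. rewrite gk_0, Rmult_0_r, exp_0. f_equal; ring.
Qed.

Lemma seg_traj a alpha beta v p :
  is_traj a 0 alpha beta (fun _ => v) p (seg a alpha beta v p).
Proof.
  split; [apply seg_0|split].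
  - intros t; split; apply derivable_continuous_pt; eexists;
      [apply seg_dx | apply seg_dy].
  - intros t _; split; [apply seg_dx|apply seg_dy].
Qed.

Definition gl_u (v T : R) (u2 : R -> R) (t : R) : R :=
  if Rlt_dec t T then v else u2 (t - T).
Definition gl_g (S gam2 : R -> pt) (T t : R) : pt :=
 (fst (S (Rmin t T)) + fst (gam2 (Rmax t T - T)) - fst (S T),
  snd (S (Rmin t T)) + snd (gam2 (Rmax t T - T)) - snd (S T)).

Lemma deriv_loc f g t l d : 0 < d -> (forall s, Rabs (s - t) < d -> f s = g s) ->
  derivable_pt_lim g t l -> derivable_pt_lim f t l.
Proof.
  intros Hd Heq Hg eps Heps. destruct (Hg eps Heps) as [del Hdel].
  assert (Hm : 0 < Rmin del d) by (apply Rmin_pos; [apply cond_pos|lra]).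
  exists (mkposreal _ Hm). intros h hne hl. simpl in hl.
  rewrite (Heq (t+h)), (Heq t).
  - apply Hdel; auto. apply Rlt_le_trans with (1 := hl). apply Rmin_l.
  - replace (t - t) with 0 by ring. rewrite Rabs_R0. lra.
  - replace (t + h - t) with h by ring. apply Rlt_le_trans with (1 := hl). apply Rmin_r.
Qed.

Lemma deriv_shift g t T l : derivable_pt_lim g (t - T) l ->
  derivable_pt_lim (fun s => g (s - T)) t l.
Proof.
  intros H eps Heps. destruct (H eps Heps) as [del Hdel]. exists del.
  intros h hne hl. replace (t + h - T) with (t - T + h) by ring. apply Hdel; auto.
Qed.

Lemma cont_comp (f g : R -> R) t : continuity_pt g t -> continuity_pt f (g t) ->
  continuity_pt (fun s => f (g s)) t.
Proof. intros; apply (continuity_pt_comp g f t); auto. Qed.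

Lemma cont_gl (A B : R -> R) T c t : (forall s, continuity_pt A s) -> (forall s, continuity_pt B s) ->
  continuity_pt (fun s => A (Rmin s T) + B (Rmax s T - T) - c) t.
Proof.
  intros HA HB.
  apply (continuity_pt_minus (fun s => A (Rmin s T) + B (Rmax s T - T)) (fun _ => c)).
  - apply (continuity_pt_plus (fun s => A (Rmin s T)) (fun s => B (Rmax s T - T))).
    + apply cont_comp; [apply cont_min|apply HA].
    + apply cont_comp; [apply cont_max|apply HB].
  - apply continuity_pt_const. intros x y; reflexivity.
Qed.

Lemma glue a alpha beta v T p u2 gam2 :
 0 < T -> u2 0 <> v ->
 is_traj a 0 alpha beta u2 (seg a alpha beta v p T) gam2 ->
 is_traj a 0 alpha beta (gl_u v T u2) p (gl_g (seg a alpha beta v p) gam2 T).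
Proof.
  intros HT Hne [H0 [Hc Hd]].
  assert (Hs := seg_traj a alpha beta v p). destruct Hs as [_ [Hsc _]].
  split; [|split].
  - unfold gl_g. rewrite Rmin_left, Rmax_right by lra.
    replace (T - T) with 0 by ring. rewrite H0, seg_0. destruct p; simpl; f_equal; ring.
  - intros t; split; unfold gl_g.
    + apply (cont_gl (fun s => fst (seg a alpha beta v p s)) (fun s => fst (gam2 s)));
        intros s; [apply (proj1 (Hsc s)) | apply (proj1 (Hc s))].
    + apply (cont_gl (fun s => snd (seg a alpha beta v p s)) (fun s => snd (gam2 s)));
        intros s; [apply (proj2 (Hsc s)) | apply (proj2 (Hc s))].
  - intros t Hlc. destruct (Rtotal_order t T) as [lt|[eq|gt]].
    + assert (Eu : gl_u v T u2 t = v) by (unfold gl_u; destruct (Rlt_dec t T); lra).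
      assert (Eg : forall s, s < T -> gl_g (seg a alpha beta v p) gam2 T s = seg a alpha beta v p s).
      { intros s Hs. unfold gl_g. rewrite Rmin_left, Rmax_right by lra.
        replace (T - T) with 0 by ring. rewrite H0. destruct (seg a alpha beta v p s); simpl; f_equal; ring. }
      rewrite Eu, (Eg t lt). split.
      * apply deriv_loc with (d := T - t) (g := fun s => fst (seg a alpha beta v p s)); [lra| |apply seg_dx].
        intros s Hs. rewrite Eg; auto. apply Rabs_def2 in Hs. lra.
      * apply deriv_loc with (d := T - t) (g := fun s => snd (seg a alpha beta v p s)); [lra| |apply seg_dy].
        intros s Hs. rewrite Eg; auto. apply Rabs_def2 in Hs. lra.
    + exfalso. subst t. destruct Hlc as [d [Hd0 Hdd]].
      assert (E := Hdd (T - d/2)). unfold gl_u in E.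
      destruct (Rlt_dec (T - d/2) T); [|lra]. destruct (Rlt_dec T T); [lra|].
      replace (T - T) with 0 in E by ring. apply Hne. symmetry. apply E.
      replace (T - d/2 - T) with (-(d/2)) by ring. rewrite Rabs_Ropp, Rabs_right; lra.
    + assert (Eu : forall s, T < s -> gl_u v T u2 s = u2 (s - T)) by
        (intros s Hs; unfold gl_u; destruct (Rlt_dec s T); [lra|auto]).
      assert (Eg : forall s, T < s -> gl_g (seg a alpha beta v p) gam2 T s = gam2 (s - T)).
      { intros s Hs. unfold gl_g. rewrite Rmin_right, Rmax_left by lra.
        destruct (gam2 (s - T)); simpl; f_equal; ring. }
      assert (Hlc2 : loc_const u2 (t - T)).
      { destruct Hlc as [d [Hd0 Hdd]]. exists (Rmin d (t - T)). split.
        - apply Rmin_pos; lra.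
        - intros s Hs. apply Rabs_def2 in Hs. destruct Hs as [Hs1 Hs2].
          assert (Hm1 := Rmin_l d (t - T)). assert (Hm2 := Rmin_r d (t - T)).
          rewrite <- (Eu t gt). rewrite <- (Hdd (s + T)).
          + rewrite Eu by lra. f_equal; ring.
          + apply Rabs_def1; lra. }
      destruct (Hd _ Hlc2) as [Dx Dy].
      rewrite (Eu t gt), (Eg t gt). split.
      * apply deriv_loc with (d := t - T) (g := fun s => fst (gam2 (s - T))); [lra| |].
        -- intros s Hs. rewrite Eg; auto. apply Rabs_def2 in Hs. lra.
        -- apply (deriv_shift (fun s => fst (gam2 s))). exact Dx.
      * apply deriv_loc with (d := t - T) (g := fun s => snd (gam2 (s - T))); [lra| |].
        -- intros s Hs. rewrite Eg; auto. apply Rabs_def2 in Hs. lra.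
        -- apply (deriv_shift (fun s => snd (gam2 s))). exact Dy.
Qed.

Lemma gl_end S gam2 T s : 0 <= s -> gl_g S gam2 T (T + s) = gam2 s.
Proof.
  intros Hs. unfold gl_g. rewrite Rmin_right, Rmax_left by lra.
  replace (T + s - T) with s by ring. destruct (gam2 s); simpl; f_equal; ring.
Qed.

Lemma gl_u0 v T u2 : 0 < T -> gl_u v T u2 0 = v.
Proof. intros; unfold gl_u; destruct (Rlt_dec 0 T); lra. Qed.

Lemma const_adm umin umax v : umin <= v <= umax -> admissible umin umax (fun _ => v).
Proof.
  intros Hv. split; [auto|]. intros T0 T1. exists nil. intros t _ _.
  exists 1. split; [lra|auto].
Qed.

Lemma gl_adm umin umax v T u2 : umin <= v <= umax -> admissible umin umax u2 ->
  admissible umin umax (gl_u v T u2).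
Proof.
  intros Hv [Hb Hl]. split.
  - intros t; unfold gl_u; destruct (Rlt_dec t T); auto.
  - intros T0 T1. destruct (Hl (T0 - T) (T1 - T)) as [L HL].
    exists (T :: map (fun s => s + T) L). intros t Ht Hn.
    destruct (Rtotal_order t T) as [lt|[eq|gt]].
    + exists (T - t). split; [lra|]. intros s Hs. apply Rabs_def2 in Hs.
      unfold gl_u. destruct (Rlt_dec s T), (Rlt_dec t T); lra.
    + exfalso; apply Hn; left; auto.
    + assert (Hnl : ~ In (t - T) L).
      { intros Hi. apply Hn. right. replace t with ((t - T) + T) by ring.
        apply (in_map (fun s => s + T)); auto. }
      destruct (HL (t - T) ltac:(lra) Hnl) as [d [Hd Hdd]].
      exists (Rmin d (t - T)). split; [apply Rmin_pos; lra|].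
      intros s Hs. apply Rabs_def2 in Hs.
      assert (Hm1 := Rmin_l d (t - T)). assert (Hm2 := Rmin_r d (t - T)).
      unfold gl_u. destruct (Rlt_dec s T); [lra|]. destruct (Rlt_dec t T); [lra|].
      apply Hdd. apply Rabs_def1; lra.
Qed.

Lemma solve2 A1 A2 R0 : A1 * A2 < 0 -> exists T1 T2, 0 < T1 /\ 0 < T2 /\ A1*T1 + A2*T2 = R0.
Proof.
  intros H. assert (H1 := Rle_abs R0). assert (H2 := Rle_abs (-R0)). rewrite Rabs_Ropp in H2.
  destruct (Rtotal_order A1 0) as [n|[z|pz]].
  - assert (0 < A2) by nra.
    exists ((R0 - Rabs R0 - 1)/A1), ((Rabs R0 + 1)/A2). split; [|split].
    + apply Rdiv_neg_neg; lra.
    + apply Rdiv_lt_0_compat; lra.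
    + field; lra.
  - subst; lra.
  - assert (A2 < 0) by nra.
    exists ((R0 + Rabs R0 + 1)/A1), ((Rabs R0 + 1)/(-A2)). split; [|split].
    + apply Rdiv_lt_0_compat; lra.
    + apply Rdiv_lt_0_compat; lra.
    + field; lra.
Qed.

Lemma gk00 alpha t : gk (0*alpha) t = t.
Proof. unfold gk. destruct (Req_EM_T (0*alpha) 0); auto. exfalso; lra. Qed.

Lemma exp_lnd k c x : 0 < c -> 0 < x -> k <> 0 -> x * exp (k * ((ln c - ln x)/k)) = c.
Proof.
  intros Hc Hx Hk. replace (k * ((ln c - ln x)/k)) with (ln c + - ln x) by (field; auto).
  rewrite exp_plus, exp_Ropp, !exp_ln by auto. field; lra.
Qed.

Lemma reach a alpha beta umin umax x0 y0 x1 y1 : umin < 0 < umax -> alpha <> 0 -> a <> 0 ->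
  0 < x0 -> 0 < x1 -> orbit_plus a 0 alpha beta umin umax (x0, y0) (x1, y1).
Proof.
  intros Hu Hal Ha Hx0 Hx1.
  assert (Hv : exists vu vd, umin <= vu <= umax /\ umin <= vd <= umax /\ 0 < vu*alpha /\ vd*alpha < 0).
  { destruct (Rtotal_order alpha 0) as [n|[z|pz]].
    - exists umin, umax. split; [lra|split;[lra|split; nra]].
    - lra.
    - exists umax, umin. split; [lra|split;[lra|split; nra]]. }
  destruct Hv as [vu [vd [Hvu [Hvd [Ku Kd]]]]].
  assert (vu <> 0) by (intro; subst; lra). assert (vd <> 0) by (intro; subst; lra).
  set (c1 := Rmax x0 1 + 1). set (c2 := Rmin x1 1 / 2).
  assert (Hc1 : x0 < c1 /\ 1 < c1) by (unfold c1; assert (H1 := Rmax_l x0 1); assert (H2 := Rmax_r x0 1); lra).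
  assert (Hc2 : c2 < x1 /\ c2 < 1 /\ 0 < c2).
  { unfold c2; assert (H1 := Rmin_l x1 1); assert (H2 := Rmin_r x1 1).
    assert (0 < Rmin x1 1) by (apply Rmin_pos; lra). lra. }
  set (t1 := (ln c1 - ln x0)/(vu*alpha)).
  set (t3 := (ln c2 - ln c1)/(vd*alpha)).
  set (t5 := (ln x1 - ln c2)/(vu*alpha)).
  assert (Ht1 : 0 < t1). { unfold t1. apply Rdiv_lt_0_compat; [|lra].
    assert (ln x0 < ln c1) by (apply ln_increasing; lra). lra. }
  assert (Ht3 : 0 < t3). { unfold t3. apply Rdiv_neg_neg; [|lra].
    assert (ln c2 < ln c1) by (apply ln_increasing; lra). lra. }
  assert (Ht5 : 0 < t5). { unfold t5. apply Rdiv_lt_0_compat; [|lra].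
    assert (ln c2 < ln x1) by (apply ln_increasing; lra). lra. }
  set (D1 := (a + vu*beta) * x0 * gk (vu*alpha) t1 - a*t1).
  set (D3 := (a + vd*beta) * c1 * gk (vd*alpha) t3 - a*t3).
  set (D5 := (a + vu*beta) * c2 * gk (vu*alpha) t5 - a*t5).
  destruct (solve2 (a*(c1-1)) (a*(c2-1)) (y1 - y0 - D1 - D3 - D5)) as [T1 [T2 [HT1 [HT2 HTe]]]].
  { assert (0 < (c1 - 1) * (1 - c2)) by (apply Rmult_lt_0_compat; lra).
    assert (0 < a*a) by (apply Rsqr_pos_lt; auto). nra. }
  remember (seg a alpha beta vu (x0,y0) t1) as p1 eqn:Ep1.
  remember (seg a alpha beta 0 p1 T1) as p2 eqn:Ep2.
  remember (seg a alpha beta vd p2 t3) as p3 eqn:Ep3.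
  remember (seg a alpha beta 0 p3 T2) as p4 eqn:Ep4.
  assert (F1 : fst p1 = c1) by (subst p1; simpl; unfold t1; apply exp_lnd; lra).
  assert (F2 : fst p2 = c1) by (subst p2; simpl; rewrite !Rmult_0_l, exp_0; lra).
  assert (F3 : fst p3 = c2) by (subst p3; simpl; rewrite F2; unfold t3; apply exp_lnd; lra).
  assert (F4 : fst p4 = c2) by (subst p4; simpl; rewrite !Rmult_0_l, exp_0; lra).
  assert (S1 : snd p1 = y0 + D1) by (subst p1; simpl; unfold D1; ring).
  assert (S2 : snd p2 = snd p1 + a*(c1-1)*T1) by (subst p2; simpl; rewrite gk00, F1; ring).
  assert (S3 : snd p3 = snd p2 + D3) by (subst p3; simpl; rewrite F2; unfold D3; ring).
  assert (S4 : snd p4 = snd p3 + a*(c2-1)*T2) by (subst p4; simpl; rewrite gk00, F3; ring).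
  exists (gl_u vu t1 (gl_u 0 T1 (gl_u vd t3 (gl_u 0 T2 (fun _ => vu))))).
  exists (gl_g (seg a alpha beta vu (x0,y0)) (gl_g (seg a alpha beta 0 p1)
           (gl_g (seg a alpha beta vd p2) (gl_g (seg a alpha beta 0 p3) (seg a alpha beta vu p4) T2) t3) T1) t1).
  exists (t1 + (T1 + (t3 + (T2 + t5)))).
  split; [|split; [|split]].
  - repeat (apply gl_adm; [lra|]). apply const_adm; lra.
  - apply glue; [lra| rewrite gl_u0; auto |].
    rewrite <- Ep1. apply glue; [lra| rewrite gl_u0; auto |].
    rewrite <- Ep2. apply glue; [lra| rewrite gl_u0; auto |].
    rewrite <- Ep3. apply glue; [lra| auto |].
    rewrite <- Ep4. apply seg_traj.
  - lra.
  - rewrite !gl_end by lra. unfold seg. f_equal.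
    + rewrite F4. unfold t5. apply exp_lnd; lra.
    + rewrite F4, S4, S3, S2, S1. assert (E5 : D5 = (a + vu*beta) * c2 * gk (vu*alpha) t5 - a*t5) by reflexivity. lra.
Qed.

Lemma ctrl_G a alpha beta umin umax : umin < 0 < umax -> alpha <> 0 -> a <> 0 ->
  ctrl_cond a 0 alpha beta umin umax inG.
Proof.
  intros Hu Hal Ha. split; [|split].
  - auto.
  - intros p Hp. exists (fun _ => 0), (seg a alpha beta 0 p). split; [apply const_adm; lra|].
    split; [apply seg_traj|]. intros t _. unfold inG, seg; simpl.
    apply Rmult_lt_0_compat; [exact Hp|apply exp_pos].
  - intros [x0 y0] Hp [x1 y1] Hq. split; [exact Hq|]. intros eps He.
    exists (x1, y1). split.
    + apply reach; auto.
    + simpl. replace (x1 - x1) with 0 by ring. replace (y1 - y1) with 0 by ring.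
      rewrite Rabs_R0. lra.
Qed.

Theorem mainTheorem7 (a b alpha beta umin umax : R) :
  umin < 0 < umax ->
  (a, b) <> (0, 0) -> (alpha, beta) <> (0, 0) ->
  b = 0 -> alpha * (a * alpha + b * beta) <> 0 ->
  control_set a b alpha beta umin umax inG /\
  (forall C : pt -> Prop, control_set a b alpha beta umin umax C ->
     forall p, C p <-> inG p).
Proof.
  intros Hu _ _ Hb Hne. subst b.
  assert (Hal : alpha <> 0) by (intro; subst; apply Hne; ring).
  assert (Ha : a <> 0) by (intro; subst; apply Hne; ring).
  assert (HG := ctrl_G a alpha beta umin umax Hu Hal Ha).
  split.
  - split; [exact HG|]. intros D HD _ p Hp. destruct HD as [H1 _]. auto.
  - intros C [HC Hmax] p. split.
    + destruct HC as [H1 _]. auto.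
    + apply Hmax; auto. destruct HC as [H1 _]. auto.
Qed.
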